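(* Let $\rho$ be an $n$-qubit state and for $1\le k\le n$ let $\alpha(\rho,\mathcal S_k)$ be the optimal value of the semidefinite program: minimize $\mathrm{Tr}(W\rho)$ over Hermitian $W$ on $\mathcal H_{[n]}$ subject to $\mathrm{Tr}(W)=1$, $W=\sum_{S\in\mathcal S_k}H^S\otimes I^{[n]\setminus S}$ for some Hermitian operators $H^S$ on $\mathcal H_S$, and $W$ fully decomposable. If $\alpha(\rho,\mathcal S_k)<0$ for some $k$, then $\rho$ is genuinely entangled and $$l(\rho)\le\min\{k:\alpha(\rho,\mathcal S_k)<0\}.$$
   Context: Let $[n]=\{1,\dots,n\}$, $\mathcal H_{[n]}=(\mathbb C^2)^{\otimes n}$, $\mathcal H_S$ the tensor product of the qubits in $S$, $I^{T}$ the identity on $\mathcal H_T$, and $\mathcal S_k$ the collection of all $k$-element subsets of $[n]$. For a density matrix $\rho$, $\rho_S$ is the partial trace over qubits outside $S$. An observable $W$ is fully decomposable if for every $\emptyset\ne S\subsetneq[n]$ there exist positive semidefinite $P_S,Q_S$ with $W=P_S+Q_S^{T_S}$, where $T_S$ is the partial transpose on $\mathcal H_S$. A pure state is biseparable if it is a product $|\alpha\rangle_S\otimes|\beta\rangle_{\bar S}$ for some $\emptyset\ne S\subsetneq[n]$; a mixed state is biseparable if it is a convex combination of biseparable pure states; genuinely entangled = not biseparable. $\mathcal C(\rho,\mathcal S)=\{\sigma\text{ density matrix}:\sigma_S=\rho_S\ \forall S\in\mathcal S\}$; $\mathcal S$ detects $\rho$'s GME if all elements of $\mathcal C(\rho,\mathcal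 S)$ are genuinely entangled; $l(\rho)=\min_{\mathcal S\text{ detects }\rho\text{'s GME}}\max_{S\in\mathcal S}|S|$. *)

(* Defs.v *)
From HB Require Import structures.
From mathcomp Require Import all_boot all_order all_algebra.
From mathcomp Require Import boolp reals complex.
Unset Printing Implicit Defensive.
Import Order.TTheory GRing.Theory Num.Theory.
Local Open Scope ring_scope.

Section Qubits.
Variable R : realType.
Local Notation C := R[i].
Variable n : nat.

(* Computational basis of H_S = (C^2)^{(x) S}: bit assignments to the qubits of S. *)
Definition Bas (S : {set 'I_n}) : finType := {ffun {i : 'I_n | i \in S} -> bool}.
Definition Bn : finType := {ffun 'I_n -> bool}.

(* Operators on a space with basis T, given by their matrix entries <x|A|y>. *)
Definition op (T : finType) := T -> T -> C.

Definition restr (S : {set 'I_n}) (z : Bn) : Bas S :=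
  [ffun i : {i : 'I_n | i \in S} => z (val i)].

Definition mix (S : {set 'I_n}) (a b : Bn) : Bn :=
  [ffun i => if i \in S then b i else a i].

Arguments restr : clear implicits.
Definition trace {T : finType} (A : op T) : C := \sum_(x : T) A x x.

Definition trprod {T : finType} (W rho : op T) : C :=
  \sum_(x : T) \sum_(y : T) W x y * rho y x.

Definition hermitian {T : finType} (A : op T) : Prop :=
  forall x y, A x y = (A y x)^*.

Definition psd {T : finType} (A : op T) : Prop :=
  hermitian A /\
  forall v : T -> C, 0 <= \sum_(x : T) \sum_(y : T) (v x)^* * A x y * v y.

Definition density {T : finType} (A : op T) : Prop := psd A /\ trace A = 1.

Definition ptrace (S : {set 'I_n}) (rho : op Bn) : op (Bas S) :=
  fun x y => \sum_(z : Bn) \sum_(w : Bn)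
    (if [&& restr S z == x, restr S w == y & restr (~: S) z == restr (~: S) w]
     then rho z w else 0).

(* H^S (x) I^{[n] \ S} *)
Definition extend (S : {set 'I_n}) (H : op (Bas S)) : op Bn :=
  fun z w => if restr (~: S) z == restr (~: S) w
             then H (restr S z) (restr S w) else 0.

Definition ptransp (S : {set 'I_n}) (Q : op Bn) : op Bn :=
  fun z w => Q (mix S z w) (mix S w z).

Definition fully_decomposable (W : op Bn) : Prop :=
  forall S : {set 'I_n}, S != set0 -> S != setT ->
    exists P Q : op Bn, [/\ psd P, psd Q &
      forall z w, W z w = P z w + ptransp S Q z w].

Definition unit_vec (psi : Bn -> C) : Prop := \sum_(z : Bn) (psi z)^* * psi z = 1.

Definition pure_biseparable (psi : Bn -> C) : Prop :=
  unit_vec psi /\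
  exists S : {set 'I_n}, [/\ S != set0, S != setT &
    exists (a : Bas S -> C) (b : Bas (~: S) -> C),
      forall z, psi z = a (restr S z) * b (restr (~: S) z)].

Definition proj (psi : Bn -> C) : op Bn := fun z w => psi z * (psi w)^*.

Definition biseparable (rho : op Bn) : Prop :=
  exists (m : nat) (p : 'I_m -> C) (psi : 'I_m -> Bn -> C),
    [/\ forall j, 0 <= p j, \sum_(j < m) p j = 1,
        forall j, pure_biseparable (psi j) &
        forall z w, rho z w = \sum_(j < m) p j * proj (psi j) z w].

Definition genuinely_entangled (rho : op Bn) : Prop := ~ biseparable rho.

Definition compatible (rho : op Bn) (F : {set {set 'I_n}}) (sigma : op Bn) : Prop :=
  density sigma /\ forall S, S \in F -> forall x y, ptrace S sigma x y = ptrace S rho x y.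

Definition detects (rho : op Bn) (F : {set {set 'I_n}}) : Prop :=
  forall sigma, compatible rho F sigma -> genuinely_entangled sigma.

(* l(rho) = min over detecting families of the max size of their members;
   n.+1 plays the role of +oo when no family detects. *)
Definition lval (rho : op Bn) : nat :=
  \big[minn/n.+1]_(F : {set {set 'I_n}} | `[< detects rho F >])
     \max_(S in F) #|S|.

Definition Sk (k : nat) : {set {set 'I_n}} := [set S : {set 'I_n} | #|S| == k].

Definition feasible (k : nat) (W : op Bn) : Prop :=
  [/\ hermitian W, trace W = 1,
      exists H : forall S : {set 'I_n}, op (Bas S),
        (forall S, S \in Sk k -> hermitian (H S)) /\
        (forall z w, W z w = \sum_(S in Sk k) extend S (H S) z w)
    & fully_decomposable W].

(* optimal value alpha(rho, S_k) (Tr(W rho) is real for Hermitian W, rho) *)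
Definition alpha (rho : op Bn) (k : nat) : R :=
  inf (fun x : R => exists W, feasible k W /\ x = complex.Re (trprod W rho)).

End Qubits.
Arguments Bas {n}.
Arguments Bn n : clear implicits.
Arguments op R T : clear implicits.
Arguments restr {n} S z.
Arguments mix {n} S a b.
Arguments trace {R T} A.
Arguments trprod {R T} W rho.
Arguments hermitian {R T} A.
Arguments psd {R T} A.
Arguments density {R T} A.
Arguments ptrace {R n} S rho.
Arguments extend {R n} S H.
Arguments ptransp {R n} S Q.
Arguments fully_decomposable {R n} W.
Arguments unit_vec {R n} psi.
Arguments pure_biseparable {R n} psi.
Arguments proj {R n} psi.
Arguments biseparable {R n} rho.
Arguments genuinely_entangled {R n} rho.
Arguments compatible {R n} rho F sigma.
Arguments detects {R n} rho F.
Arguments lval {R n} rho.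
Arguments Sk n k : clear implicits.
Arguments feasible {R n} k W.
Arguments alpha {R n} rho k.

(* Main.v *)
Require Import Defs.
From HB Require Import structures.
From mathcomp Require Import all_boot all_order all_algebra.
From mathcomp Require Import boolp reals complex ring.
Import Order.TTheory GRing.Theory Num.Theory.
Local Open Scope ring_scope.

HB.instance Definition _ := SemiGroup.isComLaw.Build nat minn minnA minnC.

Section Aux.
Variable R : realType.
Variable n : nat.
Local Notation C := R[i].

Lemma Re_ge0 (x : C) : 0 <= x -> 0 <= complex.Re x.
Proof. by case: x => a b /andP[]. Qed.

Lemma restr_mixS (S : {set 'I_n}) z w : restr S (mix S z w) = restr S w.
Proof. by apply/ffunP => i; rewrite !ffunE (valP i). Qed.

Lemma restr_mixC (S : {set 'I_n}) z w : restr (~: S) (mix S z w) = restr (~: S) z.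
Proof.
apply/ffunP => i; rewrite !ffunE; have := valP i; rewrite inE.
by move/negbTE => ->.
Qed.

Lemma mix_inv (S : {set 'I_n}) z w :
  mix S (mix S z w) (mix S w z) = z.
Proof. by apply/ffunP => i; rewrite !ffunE; case: (i \in S). Qed.

Definition qf (W : op R (Bn n)) (v : Bn n -> C) : C :=
  \sum_x \sum_y (v x)^* * W x y * v y.

Lemma qf_ptransp (S : {set 'I_n}) (Q : op R (Bn n)) (a : Bas S -> C)
  (b : Bas (~: S) -> C) :
  qf (ptransp S Q) (fun z => a (restr S z) * b (restr (~: S) z)) =
  qf Q (fun u => (a (restr S u))^* * b (restr (~: S) u)).
Proof.
rewrite /qf !pair_bigA /=.
pose h := fun p : Bn n * Bn n => (mix S p.1 p.2, mix S p.2 p.1).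
have hinj : injective h.
  by apply: (can_inj (g := h)) => -[z w]; rewrite /h /= !mix_inv.
rewrite [RHS](reindex_inj hinj); apply: eq_bigr => -[z w] _ /=.
rewrite /ptransp !restr_mixS !restr_mixC !rmorphM /= !conjCK.
ring.
Qed.

Lemma qf_decomp (W : op R (Bn n)) psi :
  fully_decomposable W -> pure_biseparable psi -> 0 <= qf W psi.
Proof.
move=> FD [_ [S [S0 ST [a [b Hpsi]]]]].
have [P [Q [[_ HP] [_ HQ] HW]]] := FD S S0 ST.
have -> : qf W psi = qf P psi + qf (ptransp S Q) psi.
  rewrite /qf -big_split /=; apply: eq_bigr => x _.
  rewrite -big_split /=; apply: eq_bigr => y _; rewrite HW; ring.
apply: addr_ge0; first exact: HP.
have -> : psi = (fun z => a (restr S z) * b (restr (~: S) z)).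
  by apply: funext => z; rewrite Hpsi.
rewrite qf_ptransp; exact: HQ.
Qed.

Lemma trprod_bisep (W sigma : op R (Bn n)) :
  fully_decomposable W -> biseparable sigma -> 0 <= trprod W sigma.
Proof.
move=> FD [m [p [psi [p0 _ Hb Hs]]]].
have -> : trprod W sigma = \sum_(j < m) p j * qf W (psi j).
  rewrite /trprod /qf.
  under eq_bigr do under eq_bigr do rewrite Hs mulr_sumr.
  under eq_bigr do rewrite exchange_big /=.
  rewrite exchange_big /=; apply: eq_bigr => j _.
  rewrite mulr_sumr; apply: eq_bigr => x _.
  rewrite mulr_sumr; apply: eq_bigr => y _.
  rewrite /proj; ring.
apply: sumr_ge0 => j _; apply: mulr_ge0 => //; exact: qf_decomp.
Qed.

Lemma sum_ind2 (T U : finType) (a : T) (b : U) (c : bool) (F : U -> T -> C) :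
  \sum_x \sum_y (if [&& a == y, b == x & c] then F x y else 0) =
  if c then F b a else 0.
Proof.
rewrite (bigD1 b) //= [X in _ + X]big1 ?addr0 => [|x xb]; last first.
  by apply: big1 => y _; rewrite [b == x]eq_sym (negbTE xb) andbF.
rewrite (bigD1 a) //= [X in _ + X]big1 ?addr0 => [|y ya]; last first.
  by rewrite [a == y]eq_sym (negbTE ya).
by rewrite !eqxx.
Qed.

Lemma trprod_extend (S : {set 'I_n}) (H : op R (Bas S)) (sigma : op R (Bn n)) :
  trprod (extend S H) sigma = \sum_x \sum_y H x y * ptrace S sigma y x.
Proof.
rewrite /trprod /extend /ptrace /=; symmetry.
under eq_bigr => x _ do under eq_bigr => y _ do
  (rewrite mulr_sumr; under eq_bigr do rewrite mulr_sumr).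
under eq_bigr do rewrite exchange_big /=.
under eq_bigr do under eq_bigr do rewrite exchange_big /=.
rewrite exchange_big /=.
under eq_bigr do rewrite exchange_big /=.
rewrite [RHS]exchange_big /=.
apply: eq_bigr => z _; apply: eq_bigr => w _.
under eq_bigr do under eq_bigr do rewrite (fun_if (fun t => H _ _ * t)) mulr0.
rewrite sum_ind2 eq_sym.
by case: ifP => _; rewrite ?mul0r // mulrC.
Qed.
Lemma trprod_sum (k : nat) (W : op R (Bn n)) (H : forall S : {set 'I_n}, op R (Bas S))
  (sigma : op R (Bn n)) :
  (forall z w, W z w = \sum_(S in Sk n k) extend S (H S) z w) ->
  trprod W sigma = \sum_(S in Sk n k) trprod (extend S (H S)) sigma.
Proof.
move=> HW; rewrite /trprod.
under eq_bigr do under eq_bigr do rewrite HW mulr_suml.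
under eq_bigr do rewrite exchange_big /=.
by rewrite exchange_big.
Qed.
End Aux.

Theorem proposition5 (R : realType) (n : nat) (rho : op R (Bn n)) :
  density rho ->
  forall k : nat, (1 <= k <= n)%N -> alpha rho k < 0 ->
    genuinely_entangled rho /\ (lval rho <= k)%N.
Proof.
move=> Drho k _ Halpha.
have [W [FW HWneg]] : exists W, feasible k W /\ complex.Re (trprod W rho) < 0.
  case: (pselect (exists x, (fun x : R => exists W, feasible k W /\ x = complex.Re (trprod W rho)) x)) => [ne|nE].
    have [y [W [FW ->]] ylt] := inf_lt ne Halpha.
    by exists W.
  exfalso; move: Halpha; rewrite /alpha inf_out ?ltxx // => -[ne _]; exact: nE.
have Hdet : detects rho (Sk n k).
  move=> sigma [Ds Hpt] Hbs.
  case: FW => _ _ [H [_ HW]] FD.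
  have := @trprod_bisep R n W sigma FD Hbs.
  have -> : trprod W sigma = trprod W rho.
    rewrite !(@trprod_sum R n k W H _ HW); apply: eq_bigr => S HS; rewrite !trprod_extend.
    apply: eq_bigr => x _; apply: eq_bigr => y _; by rewrite Hpt.
  by move/Re_ge0; rewrite leNgt HWneg.
split; first by apply: Hdet; split.
rewrite /lval (bigD1 (Sk n k)) /=; last by apply/asboolP.
apply: leq_trans (geq_minl _ _) _.
by apply/bigmax_leqP => S; rewrite inE => /eqP ->.
Qed.
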